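(* Let $A$ be a real nonsingular tridiagonal $n\times n$ matrix with diagonal entries $A_{i,i}=b_i$ ($i=1,\dots,n$), subdiagonal entries $A_{i+1,i}=a_i$ and superdiagonal entries $A_{i,i+1}=c_i$ ($i=1,\dots,n-1$), let $\mathbf F\in\mathbb R^n$ and let $\mathbf X$ be the solution of $A\mathbf X=\mathbf F$. Let $p\ge 1$ and let $n_1<n_2<\dots<n_p$ be integers with $1<n_1$ and $n_p<n$; set $n_0=1$ and $n_{p+1}=n+1$. Assume that the matrices $B^L_{n_i}$ and $B^R_{n_i}$ (defined below) are nonsingular for $i=1,\dots,p$, and let $\mathbf Z^L_{n_i}$, $\mathbf Z^R_{n_i}$ be the solutions of $B^L_{n_i}\mathbf Z^L_{n_i}=\mathbf e^L$ and $B^R_{n_i}\mathbf Z^R_{n_i}=\mathbf e^R$. Define $$\beta^L_{n_j}=\sum_{l=n_{j-1}}^{n_j-1}(\mathbf F)_l\,(A^{-1})_{n_{j-1},l}\quad (j=2,\dots,p+1),\qquad \beta^R_{n_j}=\sum_{l=n_{j-1}}^{n_j-1}(\mathbf F)_l\,(A^{-1})_{n_j,l}\quad (j=1,\dots,p).$$ Then for every $i=1,\dots,p$, $$(\mathbf X)_{n_i}=\sum_{j=1}^{i}\beta^R_{n_j}\,(\mathbf Z^R_{n_j})_{n_i}+\sum_{j=i+1}^{p+1}\beta^L_{n_j}\,(\mathbf Z^L_{n_{j-1}})_{n_i}.$$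
   Context: For $1\le k\le n$: $B^L_k$ is the $k\times k$ matrix whose rows $1,\dots,k-1$ are rows $1,\dots,k-1$ of $A$ restricted to columns $1,\dots,k$, and whose last row is $(0,\dots,0,1)$; $\mathbf e^L=(0,\dots,0,1)^{\mathrm T}\in\mathbb R^k$, and the components of $\mathbf Z^L_k$ are indexed $1,\dots,k$. $B^R_k$ is the $(n-k+1)\times(n-k+1)$ matrix with rows and columns indexed by $k,\dots,n$, whose row $k$ is $(1,0,\dots,0)$ and whose row $m$ ($m=k+1,\dots,n$) is row $m$ of $A$ restricted to columns $k,\dots,n$; $\mathbf e^R=(1,0,\dots,0)^{\mathrm T}\in\mathbb R^{n-k+1}$, and the components of $\mathbf Z^R_k$ are indexed $k,\dots,n$. $(\mathbf V)_m$ is the $m$-th component of a vector and $(A^{-1})_{r,l}$ the $(r,l)$ entry of $A^{-1}$. *)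

(* Defs.v *)
(* All indices in the paper are 1-based; we access
   mathcomp matrices (0-based ordinals) through the 1-based accessor [ent]. *)
From HB Require Import structures.
From mathcomp Require Import all_boot all_order all_algebra.
Set Implicit Arguments. Unset Strict Implicit. Unset Printing Implicit Defensive.
Import Order.TTheory GRing.Theory Num.Theory.
Local Open Scope ring_scope.

Section Defs.
Variable R : comUnitRingType.

(* 1-based entry (i,j) of a matrix; 0 when out of range (never used so). *)
Definition ent {m n : nat} (A : 'M[R]_(m, n)) (i j : nat) : R :=
  match @insub _ (fun x => x < m)%N _ i.-1, @insub _ (fun x => x < n)%N _ j.-1 with
  | Some i', Some j' => A i' j'
  | _, _ => 0
  end.

Definition vcomp {m : nat} (V : 'cV[R]_m) (i : nat) : R := ent V i 1.

Definition tridiagonal {n : nat} (A : 'M[R]_n) : Prop :=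
  forall i j : 'I_n, ((i.+1 < j) || (j.+1 < i))%N -> A i j = 0.

(* B^L_k : k x k, rows 1..k-1 are rows 1..k-1 of A restricted to columns 1..k,
   last row (0,...,0,1). *)
Definition BL {n : nat} (A : 'M[R]_n) (k : nat) : 'M[R]_k :=
  \matrix_(r < k, c < k)
    if (r.+1 < k)%N then ent A r.+1 c.+1 else (c.+1 == k)%:R.

Definition eL (k : nat) : 'cV[R]_k := \col_(r < k) (r.+1 == k)%:R.

Definition ZL {n : nat} (A : 'M[R]_n) (k : nat) : 'cV[R]_k :=
  invmx (BL A k) *m eL k.

(* B^R_k : (n-k+1) x (n-k+1), rows/columns indexed k..n (local index r <-> k+r);
   row k is (1,0,...,0), row m > k is row m of A restricted to columns k..n. *)
Definition BR {n : nat} (A : 'M[R]_n) (k : nat) : 'M[R]_(n - k + 1) :=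
  \matrix_(r < n - k + 1, c < n - k + 1)
    if r == 0 :> nat then (c == 0 :> nat)%:R else ent A (k + r) (k + c).

Definition eR (m : nat) : 'cV[R]_m := \col_(r < m) (r == 0 :> nat)%:R.

Definition ZR {n : nat} (A : 'M[R]_n) (k : nat) : 'cV[R]_(n - k + 1) :=
  invmx (BR A k) *m eR (n - k + 1).

(* (Z^R_k)_m, with components indexed k..n *)
Definition compR {n : nat} (A : 'M[R]_n) (k m : nat) : R := vcomp (ZR A k) (m - k + 1).

Definition betaL {n : nat} (A : 'M[R]_n) (F : 'cV[R]_n) (N : nat -> nat) (j : nat) : R :=
  \sum_(N j.-1 <= l < N j) vcomp F l * ent (invmx A) (N j.-1) l.

Definition betaR {n : nat} (A : 'M[R]_n) (F : 'cV[R]_n) (N : nat -> nat) (j : nat) : R :=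
  \sum_(N j.-1 <= l < N j) vcomp F l * ent (invmx A) (N j) l.

End Defs.

(* Main.v *)
Require Import Defs.
From HB Require Import structures.
From mathcomp Require Import all_boot all_order all_algebra.
From mathcomp Require Import zify ring.
Import Order.TTheory GRing.Theory Num.Theory.
Local Open Scope ring_scope.

Section Aux.
Variable R : comUnitRingType.

Lemma entE m n (A : 'M[R]_(m, n)) i j (hi : (i.-1 < m)%N) (hj : (j.-1 < n)%N) :
  ent A i j = A (Ordinal hi) (Ordinal hj).
Proof.
rewrite /ent (insubT (fun x => x < m)%N hi) (insubT (fun x => x < n)%N hj).
by congr (A _ _); apply: val_inj.
Qed.

Lemma entE0 m n (A : 'M[R]_(m, n)) i j :
  ~~ ((i.-1 < m) && (j.-1 < n))%N -> ent A i j = 0.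
Proof.
rewrite negb_and => /orP [] /negbTE h; rewrite /ent.
  by rewrite (@insubF _ (fun x => (x < m)%N) _ i.-1 h).
by case: insub => // ?; rewrite (@insubF _ (fun x => (x < n)%N) _ j.-1 h).
Qed.

Lemma sum1 (f : nat -> R) n : \sum_(1 <= l < n.+1) f l = \sum_(l < n) f l.+1.
Proof. by rewrite big_add1 /= big_mkord. Qed.

Lemma ent_mul m n q (A : 'M[R]_(m, n)) (B : 'M[R]_(n, q)) i j :
  ent (A *m B) i j = \sum_(1 <= l < n.+1) ent A i l * ent B l j.
Proof.
rewrite sum1.
have [/andP [hi hj]|h] := boolP ((i.-1 < m) && (j.-1 < q))%N.
  rewrite (@entE _ _ _ _ _ hi hj) mxE; apply: eq_bigr => l _.
  rewrite (@entE _ _ A i l.+1 hi (ltn_ord l)) (@entE _ _ B l.+1 j (ltn_ord l) hj).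
  by congr (A _ _ * B _ _); apply: val_inj.
rewrite entE0 // big1 // => l _.
move: h; rewrite negb_and => /orP [] h.
  by rewrite (@entE0 _ _ A i l.+1) ?mul0r // negb_and h.
by rewrite (@entE0 _ _ B l.+1 j) ?mulr0 // negb_and h orbT.
Qed.

Lemma ent_one n i j : (0 < i <= n)%N -> (0 < j <= n)%N ->
  ent (1%:M : 'M[R]_n) i j = (i == j)%:R.
Proof.
move=> hi hj.
have hi' : (i.-1 < n)%N by lia.
have hj' : (j.-1 < n)%N by lia.
rewrite (@entE _ _ _ _ _ hi' hj') mxE /=.
rewrite -val_eqE /=; congr (_ %:R); apply/eqP/eqP; lia.
Qed.

Lemma tri_ent n (A : 'M[R]_n) i j : tridiagonal A -> (0 < i)%N -> (0 < j)%N ->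
  ((i.+1 < j) || (j.+1 < i))%N -> ent A i j = 0.
Proof.
move=> tA hi hj h.
have [hij|] := boolP ((i.-1 < n) && (j.-1 < n))%N; last by move/entE0.
case/andP: hij => hi' hj'; rewrite (@entE _ _ _ _ _ hi' hj'); apply: tA => /=; lia.
Qed.

End Aux.

Section Aux2.
Variable R : comUnitRingType.

Lemma left_lem n (A : 'M[R]_n) k (g : nat -> R) : tridiagonal A -> (0 < k <= n)%N ->
  BL A k \in unitmx ->
  (forall m, (0 < m < k)%N -> \sum_(1 <= s < n.+1) ent A m s * g s = 0) ->
  forall r, (0 < r <= k)%N -> g r = g k * vcomp (ZL A k) r.
Proof.
move=> tA hk hB hg.
pose g' : 'cV[R]_k := \col_(r < k) g r.+1.
have HB : BL A k *m g' = g k *: eL R k.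
  apply/matrixP => r c; rewrite !mxE.
  under eq_bigr do rewrite !mxE.
  have [hr|hr] := boolP (r.+1 < k)%N.
  - rewrite ltn_eqF // mulr0 -[RHS](hg r.+1); last by lia.
    rewrite (@big_cat_nat _ _ _ k.+1) /=; [|lia|lia].
    have -> : \sum_(k.+1 <= s < n.+1) ent A r.+1 s * g s = 0.
      rewrite big_nat_cond big1 // => s /andP [/andP [hs1 hs2] _].
      rewrite tri_ent ?mul0r //; lia.
    by rewrite addr0 sum1.
  - have -> : (r.+1 == k) by apply/eqP; move: (ltn_ord r) hr => /= ? ; lia.
    rewrite mulr1.
    have := @sum1 R (fun s => (s == k)%:R * g s) k => /= <-.
    rewrite big_nat_recr /=; last lia.
    rewrite eqxx mul1r big_nat_cond big1 ?add0r // => s /andP [/andP [hs1 hs2] _].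
    by rewrite ltn_eqF ?mul0r.
have Hg' : g' = g k *: ZL A k by rewrite /ZL scalemxAr -HB mulKmx.
move=> r hr.
have hr' : (r.-1 < k)%N by lia.
have := congr1 (fun M : 'cV[R]_k => M (Ordinal hr') 0) Hg'.
rewrite /= !mxE /vcomp (@entE _ _ _ (ZL A k) r 1 hr' (ltnSn 0)) prednK; last lia.
move=> ->; rewrite /ZL mxE; congr (_ * _); apply: eq_bigr => j _; by rewrite !mxE.
Qed.

Lemma right_lem n (A : 'M[R]_n) k (g : nat -> R) : tridiagonal A -> (0 < k <= n)%N ->
  BR A k \in unitmx ->
  (forall m, (k < m <= n)%N -> \sum_(1 <= s < n.+1) ent A m s * g s = 0) ->
  forall r, (k <= r <= n)%N -> g r = g k * compR A k r.
Proof.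
move=> tA hk hB hg.
pose g' : 'cV[R]_(n - k + 1) := \col_(r < n - k + 1) g (k + r).
have sh : forall F : nat -> R,
    \sum_(k <= s < n.+1) F s = \sum_(i < n - k + 1) F (k + i).
  move=> F; rewrite -{1}(add0n k) big_addn big_mkord.
  rewrite (_ : (n.+1 - k = n - k + 1)%N); last lia.
  by apply: eq_bigr => i _; rewrite addnC.
have HB : BR A k *m g' = g k *: eR R (n - k + 1).
  apply/matrixP => r c; rewrite !mxE.
  under eq_bigr do rewrite !mxE.
  have [hr|hr] := eqVneq (r : nat) 0%N.
    rewrite mulr1 (eq_bigr (fun i : 'I_(n-k+1) => ((k + i - k)%N == 0)%:R * g (k + i))); last first.
      by move=> i _; rewrite addKn.
    rewrite -(sh (fun s => ((s - k)%N == 0)%:R * g s)) big_ltn; last lia.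
    rewrite subnn eqxx mul1r big_nat_cond big1 ?addr0 // => s /andP [/andP [hs1 hs2] _].
    by rewrite (_ : (s - k == 0)%N = false) ?mul0r //; apply/negbTE; lia.
  - rewrite mulr0 -[RHS](hg (k + r)); last by move: (ltn_ord r); lia.
    rewrite (@big_cat_nat _ _ _ k) /=; [|lia|lia].
    have -> : \sum_(1 <= s < k) ent A (k + r) s * g s = 0.
      rewrite big_nat_cond big1 // => s /andP [/andP [hs1 hs2] _].
      rewrite tri_ent ?mul0r //; lia.
    by rewrite add0r sh.
have Hg' : g' = g k *: ZR A k by rewrite /ZR scalemxAr -HB mulKmx.
move=> r hr.
have hr' : ((r - k + 1).-1 < n - k + 1)%N by lia.
have := congr1 (fun M : 'cV[R]_(n - k + 1) => M (Ordinal hr') 0) Hg'.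
rewrite /= !mxE /compR /vcomp (@entE _ _ _ (ZR A k) (r - k + 1) 1 hr' (ltnSn 0)).
move=> H; transitivity (g (k + (r - k + 1).-1)); first by congr g; lia.
apply: etrans; first exact: H.
rewrite /ZR mxE; congr (_ * _); apply: eq_bigr => j _; by rewrite !mxE.
Qed.

End Aux2.

Theorem theorem2 (R : realFieldType) (n : nat) (A : 'M[R]_n) (F X : 'cV[R]_n)
  (p : nat) (N : nat -> nat) :
  tridiagonal A ->
  A \in unitmx ->
  A *m X = F ->
  (1 <= p)%N ->
  (forall i, (1 <= i < p)%N -> (N i < N i.+1)%N) ->
  (1 < N 1)%N -> (N p < n)%N ->
  N 0%N = 1%N -> N p.+1 = n.+1 ->
  (forall i, (1 <= i <= p)%N -> BL A (N i) \in unitmx /\ BR A (N i) \in unitmx) ->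
  forall i, (1 <= i <= p)%N ->
    vcomp X (N i) =
      \sum_(1 <= j < i.+1) betaR A F N j * compR A (N j) (N i)
    + \sum_(i.+1 <= j < p.+2) betaL A F N j * vcomp (ZL A (N j.-1)) (N i).
Proof.
move=> tA uA AX p1 Nlt N1 Np N0 Np1 uB i hi.
set G := invmx A.
have XE : X = G *m F by rewrite -AX mulKmx.
have AG : A *m G = 1%:M by rewrite mulmxV.
have colG : forall m l, (0 < m <= n)%N -> (0 < l <= n)%N -> m <> l ->
    \sum_(1 <= s < n.+1) ent A m s * ent G s l = 0.
  move=> m l hm hl ml; rewrite -ent_mul AG ent_one //.
  by rewrite (_ : (m == l) = false) //; apply/negbTE/eqP.
have step : forall b, (b <= p)%N -> (N b < N b.+1)%N.
  move=> b hb; case: b hb => [|b] hb; first lia.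
  have [hbp|hbp] := ltnP b.+1 p; first by apply: Nlt; lia.
  have -> : b.+1 = p by lia.
  lia.
have mono : forall a b, (a <= b <= p.+1)%N -> (N a <= N b)%N.
  move=> a b; elim: b => [|b IH] /andP [hab hb].
    by have -> : a = 0%N by lia.
  have [hab'|hab'] := eqVneq a b.+1; first by rewrite hab'.
  have := step b ltac:(lia); have := IH ltac:(lia); lia.
have Nge : forall j, (1 <= j <= p)%N -> (1 < N j <= n)%N.
  move=> j hj; have := mono 1%N j ltac:(lia); have := mono j p ltac:(lia); lia.
pose f := fun l => ent G (N i) l * ent F l 1.
have part : forall q, (q <= p.+1)%N ->
    \sum_(N 0 <= l < N q) f l = \sum_(1 <= j < q.+1) \sum_(N j.-1 <= l < N j) f l.
  elim=> [|q IH] hq; first by rewrite !big_geq.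
  rewrite (@big_cat_nat _ _ _ (N q)); [|apply: mono; lia|apply: mono; lia].
  rewrite big_nat_recr /=; last lia.
  by rewrite IH //; lia.
rewrite /vcomp XE ent_mul -/(f _).
have := part p.+1 (leqnn _); rewrite N0 Np1 => ->.
rewrite (@big_cat_nat _ _ _ i.+1) /=; [|lia|lia].
congr (_ + _); apply: eq_big_nat => j /andP [hj1 hj2].
- rewrite /betaR big_distrl; apply: eq_big_nat => l /andP [hl1 hl2].
  have := mono 0%N j.-1 ltac:(lia); have := mono j p.+1 ltac:(lia).
  rewrite N0 Np1 => h1 h2.
  have := Nge j ltac:(lia); have := mono j i ltac:(lia); have := Nge i hi.
  move=> h3 h4 h5.
  have E : ent G (N i) l = ent G (N j) l * compR A (N j) (N i).
    apply: (@right_lem _ _ A (N j) (fun r => ent G r l)) => //.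
    - lia.
    - by case: (uB j ltac:(lia)).
    - move=> m hm; apply: colG; lia.
    - lia.
  rewrite /f /vcomp E /= -/G; ring.
- rewrite /betaL big_distrl; apply: eq_big_nat => l /andP [hl1 hl2].
  have := mono 0%N j.-1 ltac:(lia); have := mono j p.+1 ltac:(lia).
  rewrite N0 Np1 => h1 h2.
  have := Nge j.-1 ltac:(lia); have := mono i j.-1 ltac:(lia); have := Nge i hi.
  move=> h3 h4 h5.
  have E : ent G (N i) l = ent G (N j.-1) l * vcomp (ZL A (N j.-1)) (N i).
    apply: (@left_lem _ _ A (N j.-1) (fun r => ent G r l)) => //.
    - lia.
    - by case: (uB j.-1 ltac:(lia)).
    - move=> m hm; apply: colG; lia.
    - lia.
  rewrite /f /vcomp E /= -/G; rewrite /vcomp; ring.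
Qed.
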